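(* Every equivalence class (under $\sim$) of balanced words contains a unique reduced word, and this reduced word is the minimal word of the equivalence class with respect to alphabetical order.
   Context: $\mathcal{A}$ is the free associative $\mathbb{C}$-algebra on noncommuting generators $L,R$; words are finite products of these letters, and a subword is a contiguous block of letters. A word is balanced if it contains equally many $L$'s and $R$'s. $\mathcal{J}$ is the two-sided ideal generated by $\{FG-GF : F,G \text{ nonempty balanced words}\}$, and $X\sim Y$ means $X-Y\in\mathcal{J}$ (equivalence classes of words are finite). Alphabetical order is the lexicographic order on words with $L$ before $R$, a proper prefix coming before its extensions (e.g. $LL<LLR$, $LLL<LR$). A word is prime if it is nonempty, balanced, and not a product of two nonempty balanced words. For a balanced word $W=a_1\cdots a_n$, $e_k(W)=\sum_{i=1}^k\overline{a_i}$ with $\overline{R}=1$, $\overline{L}=-1$. A prime $P$ of length $n$ is an upper prime if $e_k(P)>0$ for $1\le k\le n-1$, and a lower prime if $e_k(P)<0$ for $1\le k\le n-1$. A word is reduced if it contains no subword $UD$ with $U$ an upper prime and $D$ a lower prime. *)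

(* Defs.v *)
From HB Require Import structures.
From mathcomp Require Import all_boot all_order all_algebra.
From mathcomp Require Import complex.
From mathcomp Require Import Rstruct.
From Stdlib Require Reals.
Set Implicit Arguments. Unset Strict Implicit. Unset Printing Implicit Defensive.
Import Order.TTheory GRing.Theory Num.Theory.

Definition CC := (Rdefinitions.R)[i].

Definition word := seq bool.
Definition LL : bool := false.
Definition RR : bool := true.

Definition balanced (W : word) : bool := count (pred1 LL) W == count (pred1 RR) W.

(* nonempty balanced words F, G generate J via FG - GF *)
Definition nebal (W : word) : bool := (W != [::]) && balanced W.

(* An element of the free algebra A = C<L,R>, given by its coefficient
   function on the basis of words.  The element X - Y for words X, Y: *)
Definition word_diff (X Y : word) : word -> CC :=
  fun w => ((X == w)%:R - (Y == w)%:R)%R.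

(* A generator term  c * U (F G - G F) V  of J. *)
Record jterm := JTerm { jc : CC; jU : word; jF : word; jG : word; jV : word }.

Definition jterm_coeff (t : jterm) (w : word) : CC :=
  (jc t * (((jU t ++ jF t ++ jG t ++ jV t) == w)%:R
           - ((jU t ++ jG t ++ jF t ++ jV t) == w)%:R))%R.

(* Membership in the two-sided ideal J generated by {FG - GF : F, G nonempty
   balanced}: f is a finite C-linear combination of elements U (FG - GF) V
   with U, V words (words span A, so these span J). *)
Definition inJ (f : word -> CC) : Prop :=
  exists ts : seq jterm,
    (forall t, List.In t ts -> nebal (jF t) /\ nebal (jG t)) /\
    forall w, f w = (\sum_(t <- ts) jterm_coeff t w)%R.

Definition equiv_words (X Y : word) : Prop := inJ (word_diff X Y).

Fixpoint alph_le (u v : word) : bool :=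
  match u, v with
  | [::], _ => true
  | _ :: _, [::] => false
  | a :: u', b :: v' => if a == b then alph_le u' v' else (a == LL) && (b == RR)
  end.

Definition prime_word (P : word) : Prop :=
  nebal P /\ ~ (exists F G, nebal F /\ nebal G /\ P = F ++ G).

Definition letter_val (a : bool) : int := if a == RR then 1%R else (-1)%R.
Definition e_k (k : nat) (W : word) : int := (\sum_(a <- take k W) letter_val a)%R.

Definition upper_prime (P : word) : Prop :=
  prime_word P /\ forall k, (1 <= k <= (size P).-1)%N -> (0 < e_k k P)%R.
Definition lower_prime (P : word) : Prop :=
  prime_word P /\ forall k, (1 <= k <= (size P).-1)%N -> (e_k k P < 0)%R.

Definition reduced (W : word) : Prop :=
  ~ (exists s1 U D s2, upper_prime U /\ lower_prime D /\ W = s1 ++ U ++ D ++ s2).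

(* Main.v *)
Require Import Defs.
From HB Require Import structures.
From mathcomp Require Import all_boot all_order all_algebra.
From mathcomp Require Import complex Rstruct zify.
From Stdlib Require Import Classical.
Import Order.TTheory GRing.Theory Num.Theory.
Set Implicit Arguments. Unset Strict Implicit.

Definition sumw (x : word) : int := (\sum_(a <- x) letter_val a)%R.

Fixpoint steps (h : int) (x : word) : seq (int * bool) :=
  if x is a :: x' then (h, a) :: steps (h + letter_val a)%R x' else [::].

Lemma lvT : letter_val true = 1%R. Proof. by []. Qed.
Lemma lvF : letter_val false = (-1)%R. Proof. by []. Qed.

Lemma sumw_cons a x : sumw (a :: x) = (letter_val a + sumw x)%R.
Proof. by rewrite /sumw big_cons. Qed.
Lemma sumw_nil : sumw [::] = 0%R.
Proof. by rewrite /sumw big_nil. Qed.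
Lemma sumw_cat x y : sumw (x ++ y) = (sumw x + sumw y)%R.
Proof. by rewrite /sumw big_cat. Qed.

Lemma steps_cat h x y : steps h (x ++ y) = steps h x ++ steps (h + sumw x)%R y.
Proof.
elim: x h => [|a x IH] h /=; first by rewrite sumw_nil addr0.
by rewrite IH sumw_cons addrA.
Qed.

Lemma size_steps h x : size (steps h x) = size x.
Proof. by elim: x h => [|a x IH] h //=; rewrite IH. Qed.

Lemma map_steps h x : map snd (steps h x) = x.
Proof. by elim: x h => [|a x IH] h //=; rewrite IH. Qed.

Lemma sumwE x : sumw x = ((count (pred1 RR) x)%:Z - (count (pred1 LL) x)%:Z)%R.
Proof.
elim: x => [|a x IH]; first by rewrite sumw_nil.
rewrite sumw_cons IH; case: a => /=; rewrite /RR /LL /=.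
all: rewrite ?lvT ?lvF; lia.
Qed.

Lemma balancedE x : balanced x = (sumw x == 0%R).
Proof. rewrite /balanced sumwE. apply/eqP/eqP; lia. Qed.

Lemma perm_steps_word h x y : perm_eq (steps h x) (steps h y) -> perm_eq x y.
Proof. by move=> P; rewrite -(map_steps h x) -(map_steps h y) perm_map. Qed.

Lemma perm_sumw x y : perm_eq x y -> sumw x = sumw y.
Proof. by move=> P; rewrite /sumw (perm_big _ P). Qed.

Lemma perm_size_w h x y : perm_eq (steps h x) (steps h y) -> size x = size y.
Proof. by move=> P; rewrite -(size_steps h x) -(size_steps h y) (perm_size P). Qed.

Lemma split_steps g b h x : (g, b) \in steps h x ->
  exists p z, [/\ x = p ++ b :: z, (h + sumw p)%R = g & (g, b) \notin steps h p].
Proof.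
elim: x h => [|a x IH] h //=; rewrite in_cons.
case E: ((g, b) == (h, a)).
  by move/eqP: E => [-> ->] _; exists nil, x; rewrite sumw_nil addr0.
rewrite /=.
move=> /IH [p [z [-> H1 H2]]]; exists (a :: p), z; split => //.
  by rewrite sumw_cons addrA.
by rewrite /= in_cons E.
Qed.

Lemma ivt_down (c : int) : forall y a, (c <= a)%R -> (a + sumw y < c)%R -> (c, false) \in steps a y.
Proof.
elim => [|d y IH] a H1 H2 /=; first by move: H2; rewrite sumw_nil addr0; lia.
rewrite in_cons; case E: ((c, false) == (a, d)) => //=.
move: H2; rewrite sumw_cons addrA => H2.
apply: IH => //.
case: d E {H2} => /= E; rewrite ?lvT ?lvF; first lia.
have : c != a by apply/eqP => Ec; move: E; rewrite Ec eqxx.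
lia.
Qed.

Lemma ivt_up (c : int) : forall y a, (a <= c)%R -> (c < a + sumw y)%R -> (c, true) \in steps a y.
Proof.
elim => [|d y IH] a H1 H2 /=; first by move: H2; rewrite sumw_nil addr0; lia.
rewrite in_cons; case E: ((c, true) == (a, d)) => //=.
move: H2; rewrite sumw_cons addrA => H2.
apply: IH => //.
case: d E {H2} => /= E; rewrite ?lvT ?lvF; last lia.
have : c != a by apply/eqP => Ec; move: E; rewrite Ec eqxx.
lia.
Qed.

Lemma lv_pm b : letter_val b = 1%R \/ letter_val b = (-1)%R.
Proof. by case: b; [left|right]. Qed.

Lemma e_kE k W : e_k k W = sumw (take k W).
Proof. by []. Qed.

Lemma e_kS k W : (k < size W)%N -> e_k k.+1 W = (e_k k W + letter_val (nth false W k))%R.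
Proof.
move=> H; rewrite !e_kE (take_nth false H) -cats1 sumw_cat sumw_cons sumw_nil addr0 //.
Qed.

Lemma nebal_sumw P : nebal P -> P != [::] /\ sumw P = 0%R.
Proof. by case/andP => H1; rewrite balancedE => /eqP. Qed.

Lemma nebal_intro P : P != [::] -> sumw P = 0%R -> nebal P.
Proof. by move=> H1 H2; rewrite /nebal H1 balancedE H2 eqxx. Qed.

Lemma nebal_size P : nebal P -> exists a b P', P = a :: b :: P'.
Proof.
case/nebal_sumw; case: P => [|a [|b P']] //= _.
  by rewrite sumw_cons sumw_nil; case: a.
by move=> _; exists a, b, P'.
Qed.

Lemma prefix_prime n : forall p q, (size p <= n)%N -> nebal p ->
  exists P rest, p ++ q = P ++ rest /\ prime_word P.
Proof.
elim: n => [|n IH] p q Hs Hp.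
  by case/nebal_size: Hp => a [b [P' E]]; move: Hs; rewrite E.
case: (classic (prime_word p)) => Hpr; first by exists p, q.
have [F [G [HF [HG E]]]] : exists F G, nebal F /\ nebal G /\ p = F ++ G.
  apply: NNPP => C; apply: Hpr; split => //.
have [P [rest [E2 HP]]] : exists P rest, F ++ (G ++ q) = P ++ rest /\ prime_word P.
  apply: IH => //.
  case/nebal_size: HG => a [b [G' EG]].
  move: Hs; rewrite E EG size_cat /=; lia.
by exists P, rest; rewrite E -catA.
Qed.

Lemma suffix_prime n : forall p, (size p <= n)%N -> nebal p ->
  exists p1 P, p = p1 ++ P /\ prime_word P.
Proof.
elim: n => [|n IH] p Hs Hp.
  by case/nebal_size: Hp => a [b [P' E]]; move: Hs; rewrite E.
case: (classic (prime_word p)) => Hpr; first by exists [::], p.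
have [F [G [HF [HG E]]]] : exists F G, nebal F /\ nebal G /\ p = F ++ G.
  apply: NNPP => C; apply: Hpr; split => //.
have [p1 [P [E2 HP]]] : exists p1 P, G = p1 ++ P /\ prime_word P.
  apply: IH => //.
  case/nebal_size: HF => a [b [F' EF]].
  move: Hs; rewrite E EF size_cat /=; lia.
by exists (F ++ p1), P; rewrite E E2 catA.
Qed.

Lemma prime_ek_neq0 P k : prime_word P -> (1 <= k)%N -> (k < size P)%N -> e_k k P != 0%R.
Proof.
case=> HP Hn H1 H2; apply/eqP => E; apply: Hn.
have [_ HS] := nebal_sumw HP.
exists (take k P), (drop k P); split; last split; last by rewrite cat_take_drop.
  apply: nebal_intro; last by rewrite -e_kE.
  by rewrite -size_eq0 size_take H2; lia.
apply: nebal_intro; first by apply/eqP => E0; move: (f_equal size E0); rewrite size_drop /=; lia.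
by move: HS; rewrite -{1}(cat_take_drop k P) sumw_cat -e_kE E add0r.
Qed.

Lemma prime_lower P' : prime_word (false :: P') -> lower_prime (false :: P').
Proof.
move=> HP; split => // k /andP [Hk1 Hk2].
elim: k Hk1 Hk2 => [|k IH] // _ Hk.
case: k IH Hk => [|k] IH Hk; first by rewrite e_kE /= take0 sumw_cons sumw_nil.
have Hlt : (k.+1 < size (false :: P'))%N by move: Hk; rewrite /=; lia.
have IH' : (e_k k.+1 (false :: P') < 0)%R by apply: IH => //; move: Hk; rewrite /=; lia.
have := prime_ek_neq0 HP (isT : (1 <= k.+2)%N) (_ : (k.+2 < size (false :: P'))%N).
rewrite e_kS //; case: (lv_pm (nth false (false :: P') k.+1)) => ->.
  move=> H; have {}H := H ltac:(by move: Hk; rewrite /=; lia); lia.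
move=> H; lia.
Qed.

Lemma prime_upper P' : prime_word (true :: P') -> upper_prime (true :: P').
Proof.
move=> HP; split => // k /andP [Hk1 Hk2].
elim: k Hk1 Hk2 => [|k IH] // _ Hk.
case: k IH Hk => [|k] IH Hk; first by rewrite e_kE /= take0 sumw_cons sumw_nil.
have Hlt : (k.+1 < size (true :: P'))%N by move: Hk; rewrite /=; lia.
have IH' : (0 < e_k k.+1 (true :: P'))%R by apply: IH => //; move: Hk; rewrite /=; lia.
have := prime_ek_neq0 HP (isT : (1 <= k.+2)%N) (_ : (k.+2 < size (true :: P'))%N).
rewrite e_kS //; case: (lv_pm (nth false (true :: P') k.+1)) => ->.
  move=> H; lia.
move=> H; have {}H := H ltac:(by move: Hk; rewrite /=; lia); lia.
Qed.

Lemma reduced_tail a x : reduced (a :: x) -> reduced x.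
Proof.
move=> H [s1 [U [D [s2 [HU [HD E]]]]]]; apply: H.
by exists (a :: s1), U, D, s2; rewrite E.
Qed.

Lemma red_contra s1 U q r : reduced (s1 ++ U ++ (false :: q) ++ r) ->
  upper_prime U -> nebal (false :: q) -> False.
Proof.
move=> Hred HU Hq.
have [D [rest [E HD]]] := @prefix_prime (size (false :: q)) (false :: q) r (leqnn _) Hq.
have [d [d' [D' ED]]] := nebal_size HD.1.
move: E; rewrite ED /= => -[Ed E]; subst d.
apply: Hred; exists s1, U, (false :: d' :: D'), rest; split; first done; split.
  by apply: prime_lower; rewrite -ED.
by rewrite /= E.
Qed.

Lemma R_case h x' : reduced (true :: x') -> (h, false) \in steps h (true :: x') ->
  count (pred1 (h,false)) (steps h (true :: x')) = 1%N /\ (h + sumw (true :: x') < h)%R.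
Proof.
move=> Hred Hin.
have [p [z' [Ex Hp Hnot]]] := split_steps Hin.
have Hp0 : sumw p = 0%R by lia.
have Hpne : p != [::] by case: p Ex {Hp Hnot Hp0}.
have [p1 [P [Ep HP]]] := @suffix_prime (size p) p (leqnn _) (nebal_intro Hpne Hp0).
have [c [c' [P' EP]]] := nebal_size HP.1.
have HP0 := (nebal_sumw HP.1).2.
have Hp10 : sumw p1 = 0%R by move: Hp0; rewrite Ep sumw_cat HP0 addr0.
have Hc : c = true.
  case: c EP => // EP; exfalso; move/negP: Hnot; apply.
  by rewrite Ep steps_cat mem_cat EP Hp10 addr0 /= in_cons eqxx orbT.
subst c; have HU : upper_prime P by rewrite EP; apply: prime_upper; rewrite -EP.
have Ex2 : true :: x' = p1 ++ P ++ (false :: z') by rewrite Ex Ep -catA.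
case Hz: (((h, false) \in steps (h + letter_val false) z') || ((h, true) \in steps (h + letter_val false) z')).
  exfalso.
  have [b Hb] : exists b, (h, b) \in steps (h + letter_val false) z'
    by case/orP: Hz => Hz; [exists false | exists true].
  have [q [r [Ez Hq _]]] := split_steps Hb.
  apply: (red_contra (s1 := p1) (U := P) (q := q) (r := b :: r)) => //.
    by rewrite /= -Ez -Ex2.
  by apply: nebal_intro => //; rewrite sumw_cons; move: Hq; rewrite lvF; lia.
have He : (h + sumw (true :: x') = h + letter_val false + sumw z')%R.
  by rewrite Ex sumw_cat sumw_cons Hp0 lvF; lia.
have Hlt : (h + sumw (true :: x') < h)%R.
  rewrite He lvF.
  case: (ltrgtP (h - 1 + sumw z')%R h) => // H.
    exfalso; move/negbT: Hz; rewrite negb_or => /andP [_ /negP]; apply.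
    by apply: ivt_up; rewrite lvF; lia.
  exfalso; apply: (red_contra (s1 := p1) (U := P) (q := z') (r := [::])) => //.
    by rewrite cats0 -Ex2.
  by apply: nebal_intro => //; rewrite sumw_cons lvF; lia.
split => //.
rewrite Ex steps_cat Hp count_cat /= eqxx.
move/negbT: Hz; rewrite negb_or => /andP [Hz1 _].
by rewrite (count_memPn Hnot) (count_memPn Hz1).
Qed.

Lemma L_case h x' : (h + sumw (false :: x') < h)%R -> (h, true) \in steps h (false :: x') ->
  (2 <= count (pred1 (h,false)) (steps h (false :: x')))%N.
Proof.
have Hne : ((h, true) == (h, false)) = false by apply/eqP => -[].
move=> He; rewrite /= in_cons Hne.
move=> /= Hin.
have [q [r [Ex Hq _]]] := split_steps Hin.
have Hr : (h, false) \in steps (h + 1) r.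
  apply: ivt_down; first lia.
  move: He; rewrite Ex sumw_cons sumw_cat sumw_cons lvT; move: Hq; rewrite lvF; lia.
rewrite eqxx Ex steps_cat Hq count_cat /= lvT.
move: Hr; rewrite -has_pred1 has_count Hne /=; lia.
Qed.

Definition fl (h : int) (s : seq (int * bool)) (e : int) : bool :=
  if (e < h)%R then (2 <= count (pred1 (h,false)) s)%N ||
     ((1 <= count (pred1 (h,false)) s)%N && (count (pred1 (h,true)) s == 0%N))
  else (1 <= count (pred1 (h,false)) s)%N.

Lemma head_det h a x' : reduced (a :: x') ->
  a = ~~ fl h (steps h (a :: x')) (h + sumw (a :: x'))%R.
Proof.
move=> Hred; case: a Hred => Hred.
  have HcR : count (pred1 (h,true)) (steps h (true :: x')) != 0%N by rewrite /= eqxx.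
  case Hin: ((h, false) \in steps h (true :: x')).
    have [Hc He] := R_case Hred Hin.
    by rewrite /fl He Hc /= (negbTE HcR).
  move/negbT/count_memPn: Hin => Hc.
  by rewrite /fl Hc; case: ifP.
have HcL : (1 <= count (pred1 (h,false)) (steps h (false :: x')))%N by rewrite /= eqxx.
rewrite /fl HcL; case: ifP => // He.
case HcR: (count (pred1 (h,true)) (steps h (false :: x')) == 0%N); first by rewrite orbT.
have Hin : (h, true) \in steps h (false :: x').
  by rewrite -has_pred1 has_count lt0n HcR.
by rewrite (L_case He Hin).
Qed.

Lemma uniq_red : forall x y h, reduced x -> reduced y ->
  perm_eq (steps h x) (steps h y) -> x = y.
Proof.
elim => [|a x IH] y h Hx Hy HP.
  by have := perm_size_w HP; case: y {Hy HP}.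
case: y Hy HP => [|b y] Hy HP; first by have := perm_size_w HP.
have Hab : a = b.
  rewrite (head_det h Hx) (head_det h Hy).
  have Hs : sumw (a :: x) = sumw (b :: y) by apply/perm_sumw/(perm_steps_word HP).
  move/permP: HP => Hc.
  by rewrite /fl Hs !Hc.
subst b; congr (_ :: _).
apply: (IH y (h + letter_val a)%R (reduced_tail Hx) (reduced_tail Hy)).
by move: HP; rewrite /= perm_cons.
Qed.

Lemma move_perm U F G V h : nebal F -> nebal G ->
  perm_eq (steps h (U ++ F ++ G ++ V)) (steps h (U ++ G ++ F ++ V)).
Proof.
move=> /nebal_sumw [_ HF] /nebal_sumw [_ HG].
rewrite !steps_cat HF HG !addr0 perm_cat2l !catA perm_cat2r perm_catC //.
Qed.

Lemma sum_ind (P : pred word) (x : word) ws : uniq ws ->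
  (\sum_(w <- ws | P w) ((x == w)%:R : CC) = (P x && (x \in ws))%:R)%R.
Proof.
elim: ws => [|a ws IH]; first by rewrite big_nil andbF.
rewrite /= => /andP [Ha Hu]; rewrite big_cons IH // in_cons.
case: (eqVneq x a) => [->|Hne] /=.
  rewrite (negbTE Ha) andbF addr0; by case: (P a).
by case: (P a); rewrite ?add0r.
Qed.

Lemma big_In0 (ts : seq jterm) (g : jterm -> CC) (Q : jterm -> Prop) :
  (forall t, List.In t ts -> Q t) -> (forall t, Q t -> g t = 0%R) ->
  (\sum_(t <- ts) g t = 0)%R.
Proof.
elim: ts => [|a ts IH] H1 H2; first by rewrite big_nil.
rewrite big_cons H2; last by apply: H1; left.
by rewrite add0r IH // => t Ht; apply: H1; right.
Qed.

Lemma in_flat (f : jterm -> seq word) ts t x : List.In t ts -> x \in f t ->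
  x \in flatten (map f ts).
Proof.
elim: ts => [|a ts IH] //= [->|Ht] Hx; rewrite mem_cat ?Hx //.
by rewrite IH // orbT.
Qed.

Lemma inJ_perm X Y : equiv_words X Y -> perm_eq (steps 0 X) (steps 0 Y).
Proof.
case=> ts [Hts Hf].
pose P : pred word := fun w => perm_eq (steps 0 w) (steps 0 X).
pose w1 t := jU t ++ jF t ++ jG t ++ jV t.
pose w2 t := jU t ++ jG t ++ jF t ++ jV t.
pose ws := undup (X :: Y :: flatten (map (fun t => [:: w1 t; w2 t]) ts)).
have Hu : uniq ws by apply: undup_uniq.
have HX : X \in ws by rewrite mem_undup mem_head.
have HY : Y \in ws by rewrite mem_undup !in_cons eqxx orbT.
have E1 : (\sum_(w <- ws | P w) word_diff X Y w = 1 - (P Y)%:R)%R.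
  rewrite /word_diff sumrB !sum_ind // HX HY /P perm_refl !andbT //.
have E2 : (\sum_(w <- ws | P w) word_diff X Y w = 0)%R.
  rewrite (eq_bigr _ (fun w _ => Hf w)) exchange_big /=.
  apply: (big_In0 (Q := fun t => List.In t ts)) => // t Ht.
  have [HF HG] := Hts t Ht.
  have Hw1 : w1 t \in ws.
    rewrite mem_undup !in_cons; apply/orP; right; apply/orP; right.
    by apply: (in_flat (f := fun t => [:: w1 t; w2 t])) Ht _; rewrite mem_head.
  have Hw2 : w2 t \in ws.
    rewrite mem_undup !in_cons; apply/orP; right; apply/orP; right.
    by apply: (in_flat (f := fun t => [:: w1 t; w2 t])) Ht _; rewrite !in_cons eqxx orbT.
  have HP : P (w1 t) = P (w2 t).
    rewrite /P; apply/idP/idP => H.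
      by apply: perm_trans H; rewrite perm_sym; apply: move_perm.
    by apply: perm_trans H; apply: move_perm.
  rewrite /jterm_coeff -mulr_sumr sumrB.
  rewrite (sum_ind _ (jU t ++ jF t ++ jG t ++ jV t)) // (sum_ind _ (jU t ++ jG t ++ jF t ++ jV t)) //.
  by rewrite -/(w1 t) -/(w2 t) Hw1 Hw2 HP subrr mulr0.
move: E1; rewrite E2; case HPY: (P Y).
  by move=> _; rewrite perm_sym.
by rewrite subr0 => /eqP; rewrite eq_sym oner_eq0.
Qed.

Lemma equiv_refl X : equiv_words X X.
Proof.
exists [::]; split => // w; by rewrite big_nil /word_diff subrr.
Qed.

Lemma equiv_trans X Y Z : equiv_words X Y -> equiv_words Y Z -> equiv_words X Z.
Proof.
case=> ts1 [H1 F1] [ts2 [H2 F2]]; exists (ts1 ++ ts2); split.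
  by move=> t Ht; case: (List.in_app_or _ _ _ Ht) => ?; [apply: H1 | apply: H2].
move=> w; rewrite big_cat -F1 -F2 /word_diff /= addrA subrK //.
Qed.

Lemma equiv_move s1 U D s2 : nebal U -> nebal D ->
  equiv_words (s1 ++ D ++ U ++ s2) (s1 ++ U ++ D ++ s2).
Proof.
move=> HU HD; exists [:: JTerm 1%R s1 D U s2]; split.
  by move=> t [<-|[]].
by move=> w; rewrite big_seq1 /jterm_coeff /= mul1r.
Qed.

Lemma alph_le_refl u : alph_le u u.
Proof. by elim: u => //= a u IH; rewrite eqxx. Qed.

Lemma alph_le_total u v : alph_le u v || alph_le v u.
Proof.
elim: u v => [|a u IH] [|b v] //=.
by case: a; case: b => //=; apply: IH.
Qed.

Lemma alph_le_trans u v w : alph_le u v -> alph_le v w -> alph_le u w.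
Proof.
elim: u v w => [|a u IH] [|b v] [|c w] //=.
by case: a; case: b; case: c => //=; apply: IH.
Qed.

Lemma alph_le_cat s u v : alph_le (s ++ u) (s ++ v) = alph_le u v.
Proof. by elim: s => //= a s IH; rewrite eqxx. Qed.

Lemma upper_head U : upper_prime U -> exists U', U = true :: U'.
Proof.
case=> [[Hn _] Hk]; have [a [b [U' E]]] := nebal_size Hn.
have := Hk 1%N; rewrite E e_kE /= ?take0 sumw_cons sumw_nil addr0.
case: a {E} => [_|]; first by exists (b :: U').
by move=> /(_ ltac:(lia)).
Qed.

Lemma lower_head D : lower_prime D -> exists D', D = false :: D'.
Proof.
case=> [[Hn _] Hk]; have [a [b [D' E]]] := nebal_size Hn.
have := Hk 1%N; rewrite E e_kE /= ?take0 sumw_cons sumw_nil addr0.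
case: a {E} => [|_]; last by exists (b :: D').
by move=> /(_ ltac:(lia)).
Qed.

Lemma exists_min (Q : word -> Prop) (s : seq word) : (exists x, x \in s /\ Q x) ->
  exists r, [/\ Q r, r \in s & forall w, w \in s -> Q w -> alph_le r w].
Proof.
elim: s => [|a s IH] [x [Hx HQ]] //.
case: (classic (exists y, y \in s /\ Q y)) => [Hs|Hs].
  have [r [Qr rin rmin]] := IH Hs.
  case: (classic (Q a)) => Qa.
    case/orP: (alph_le_total a r) => Har.
      exists a; split; [done | by rewrite mem_head |].
      move=> w; rewrite in_cons => /orP [/eqP ->|Hw] Qw; first by apply: alph_le_refl.
      by apply: alph_le_trans Har (rmin w Hw Qw).
    exists r; split; [done | by rewrite in_cons rin orbT |].
    by move=> w; rewrite in_cons => /orP [/eqP ->|Hw] Qw //; apply: rmin.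
  exists r; split; [done | by rewrite in_cons rin orbT |].
  by move=> w; rewrite in_cons => /orP [/eqP ->|Hw] Qw //; apply: rmin.
have Hxa : x = a.
  move: Hx; rewrite in_cons => /orP [/eqP //|Hx]; exfalso; apply: Hs; by exists x.
subst x; exists a; split; [done | by rewrite mem_head |].
move=> w; rewrite in_cons => /orP [/eqP ->|Hw] Qw; first by apply: alph_le_refl.
by exfalso; apply: Hs; exists w.
Qed.

Fixpoint allw (n : nat) : seq word :=
  if n is n'.+1 then map (cons false) (allw n') ++ map (cons true) (allw n') else [:: [::]].

Lemma allwP w : w \in allw (size w).
Proof.
elim: w => [|a w IH] /=; first by rewrite mem_seq1.
by rewrite mem_cat; case: a; rewrite (map_f _ IH) ?orbT.
Qed.

Lemma equiv_size w W : equiv_words w W -> size w = size W.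
Proof. by move=> H; apply: (perm_size_w (h := 0%R)); apply: inJ_perm. Qed.

Theorem proposition6p6 :
  forall W : word, balanced W ->
  exists r : word,
    [/\ equiv_words r W, reduced r,
        (forall r' : word, equiv_words r' W -> reduced r' -> r' = r)
      & (forall w : word, equiv_words w W -> alph_le r w)].
Proof.
move=> W _.
have [r [Qr rin rmin]] := @exists_min (fun w => equiv_words w W) (allw (size W))
  (ex_intro _ W (conj (allwP W) (equiv_refl W))).
have Hmin : forall w, equiv_words w W -> alph_le r w.
  move=> w Hw; apply: rmin => //; rewrite -(equiv_size Hw); apply: allwP.
have Hred : reduced r.
  move=> [s1 [U [D [s2 [HU [HD E]]]]]].
  have Q' : equiv_words (s1 ++ D ++ U ++ s2) W.
    apply: equiv_trans Qr; rewrite E; apply: equiv_move; [exact: HU.1.1 | exact: HD.1.1].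
  have := Hmin _ Q'.
  have [U' EU] := upper_head HU; have [D' ED] := lower_head HD.
  by rewrite E EU ED alph_le_cat.
exists r; split => //.
move=> r' Hr' Hred'.
apply: (uniq_red (h := 0%R)) => //.
by apply: perm_trans (inJ_perm Hr') _; rewrite perm_sym; apply: inJ_perm.
Qed.
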